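(* Let $K$ be a fractal gasket with $\{\omega_\alpha,\omega_\beta,\omega_\gamma\}\subset K$ satisfying the top isolated condition. Then its topology automaton $M_K$ satisfies the $\gamma$-isolated condition.
   Context: Let $\Delta\subset\mathbb R^2$ be the triangle with vertices $\omega_\alpha=(0,0)$, $\omega_\beta=(1,0)$, $\omega_\gamma=(1/2,\sqrt3/2)$. A fractal gasket is the attractor $K$ of $\{\varphi_j(z)=r_j(z+d_j)\}_{j=1}^N$, $r_j\in(0,1)$, $d_j\in\mathbb R^2$, with $\bigcup_j\varphi_j(\Delta)\subset\Delta$ and, for $i\ne j$, $\varphi_i(\Delta)\cap\varphi_j(\Delta)$ consisting only of common vertices. $\Sigma=\{1,\dots,N\}$; $\alpha=-1$ if $(0,0)\notin K$, else $\varphi_\alpha((0,0))=(0,0)$; $\beta=-2$ or $\varphi_\beta$ fixes $(1,0)$; $\gamma=-3$ or $\varphi_\gamma$ fixes $\omega_\gamma$. Top isolated condition: $\omega_\gamma\in K$ and $\varphi_\gamma(\Delta)\cap\varphi_j(\Delta)=\emptyset$ for all $j\ne\gamma$. Topology automaton $M_K$: the automaton with states $S_{uv}$ ($u\ne v\in\{\alpha,\beta,\gamma\}$), $Id$, $Exit$, input alphabet $\Sigma^2$, $\delta(Id,(i,i))=Id$, and for $i\ne j$: $\delta(Id,(i,j))=S_{uv}$ if $u,v\in\Sigma$ and $\varphi_i(\omega_v)=\varphi_j(\omega_u)$, $\delta(Id,(i,j))=Exit$ if $\varphi_i(K)\cap\varphi_j(K)=\emptyset$; $\delta(S_{uv},(i,j))=S_{uv}$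 if $(i,j)=(v,u)$, else $Exit$. $\mathcal P_{uv}=\{(i,j):\delta(Id,(i,j))=S_{uv}\}$; $i\triangleleft_{uv}j$ iff $(i,j)\in\mathcal P_{uv}$ (iff $j\triangleleft_{vu}i$); $j$ is $uv$-isolated if there is neither $i$ with $i\triangleleft_{uv}j$ nor $k$ with $j\triangleleft_{uv}k$. $\gamma$-isolated condition: $\alpha,\beta,\gamma\in\Sigma$; the directed graph on $\Sigma$ with edges $\mathcal P_{\alpha\gamma}\cup\mathcal P_{\beta\gamma}$ has no directed cycle; $\gamma$ is $\alpha\gamma$-, $\beta\gamma$- and $\alpha\beta$-isolated. *)

(* Defs.v *)
From HB Require Import structures.
From mathcomp Require Import all_boot all_order all_algebra.
From mathcomp Require Import all_classical all_reals topology normedtype.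
Set Implicit Arguments. Unset Strict Implicit. Unset Printing Implicit Defensive.
Import Order.TTheory GRing.Theory Num.Theory numFieldTopology.Exports.
Local Open Scope ring_scope.
Local Open Scope classical_set_scope.

Section Gasket.
Variable R : realType.
Variable N : nat.
(* Sigma = 'I_N (indices 0..N-1 in place of 1..N). *)
Variable r : 'I_N -> R.
Variable d : 'I_N -> R * R.

Inductive vtx := Va | Vb | Vc.

Definition omega (u : vtx) : R * R :=
  match u with
  | Va => (0, 0)
  | Vb => (1, 0)
  | Vc => (2^-1, Num.sqrt 3 / 2)
  end.

Definition Delta : set (R * R) :=
  [set z | exists l1 l2 l3 : R, [/\ 0 <= l1, 0 <= l2, 0 <= l3, l1 + l2 + l3 = 1 &
     z = (l1 * (omega Va).1 + l2 * (omega Vb).1 + l3 * (omega Vc).1,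
          l1 * (omega Va).2 + l2 * (omega Vb).2 + l3 * (omega Vc).2)]].

Definition phi (j : 'I_N) (z : R * R) : R * R :=
  (r j * (z.1 + (d j).1), r j * (z.2 + (d j).2)).

(* the index alpha / beta / gamma: Some j with phi_j fixing omega_u,
   None (playing the role of -1, -2, -3) if no such index exists *)
Definition vidx (u : vtx) : option 'I_N :=
  [pick j | phi j (omega u) == omega u].

(* P_uv = {(i,j) : delta(Id,(i,j)) = S_uv} *)
Definition Prel (u v : vtx) : rel 'I_N := fun i j =>
  [&& i != j, vidx u != None, vidx v != None & phi i (omega v) == phi j (omega u)].

Definition isolated (u v : vtx) (j : 'I_N) : bool :=
  ~~ [exists i, Prel u v i j] && ~~ [exists k, Prel u v j k].

Definition gedge : rel 'I_N := fun i j => Prel Va Vc i j || Prel Vb Vc i j.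

Definition gamma_isolated : Prop :=
  exists a b c : 'I_N,
    [/\ vidx Va = Some a, vidx Vb = Some b, vidx Vc = Some c,
        (forall s : seq 'I_N, s != [::] -> ~~ cycle gedge s) &
        [/\ isolated Va Vc c, isolated Vb Vc c & isolated Va Vb c]].

Definition gasket_IFS : Prop :=
  (forall j, 0 < r j < 1) /\
  (forall j, phi j @` Delta `<=` Delta) /\
  (forall i j, i != j -> forall z, (phi i @` Delta) z -> (phi j @` Delta) z ->
     exists u v : vtx, z = phi i (omega u) /\ z = phi j (omega v)).

Definition attractor (K : set (R * R)) : Prop :=
  [/\ compact K, K !=set0 & K = \bigcup_(j in [set: 'I_N]) (phi j @` K)].

Definition top_isolated (K : set (R * R)) : Prop :=
  K (omega Vc) /\
  exists c, vidx Vc = Some c /\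
    forall j, j != c -> (phi c @` Delta) `&` (phi j @` Delta) = set0.

End Gasket.

(* Main.v *)
Require Import Defs.
From HB Require Import structures.
From mathcomp Require Import all_boot all_order all_algebra.
From mathcomp Require Import all_classical all_reals topology normedtype.
From mathcomp Require Import sequences.
From mathcomp Require Import ring lra.
Import Order.TTheory GRing.Theory Num.Theory.
Import numFieldTopology.Exports.
Local Open Scope ring_scope.
Local Open Scope classical_set_scope.

Section Aux.
Variable R : realType.

Definition lin (a b c : R) (z : R * R) := a * z.1 + b * z.2 + c.
Definition s3 : R := Num.sqrt 3.
Lemma s3_gt0 : 0 < s3. Proof. by rewrite /s3 sqrtr_gt0 ltr0n. Qed.

Definition inT (z : R * R) :=
  [/\ 0 <= lin 0 1 0 z, 0 <= lin s3 (-1) 0 z & 0 <= lin (- s3) (-1) s3 z].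

Lemma Delta_inT z : Delta z -> inT z.
Proof.
case=> l1 [l2 [l3 [h1 h2 h3 hs ->]]]; rewrite /inT /lin /= -/s3.
have s0 := s3_gt0.
have e1 : 0 * (l1 * 0 + l2 * 1 + l3 / 2) + 1 * (l1 * 0 + l2 * 0 + l3 * (s3 / 2)) + 0
   = l3 * s3 / 2 by ring.
have e2 : s3 * (l1 * 0 + l2 * 1 + l3 / 2) + -1 * (l1 * 0 + l2 * 0 + l3 * (s3 / 2)) + 0
   = s3 * l2 by field.
have e3 : - s3 * (l1 * 0 + l2 * 1 + l3 / 2) + -1 * (l1 * 0 + l2 * 0 + l3 * (s3 / 2)) + s3
   = s3 * (1 - l2 - l3) by field.
rewrite e1 e2 e3; split.
- by apply: divr_ge0 => //; apply: mulr_ge0 => //; exact: ltW.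
- by apply: mulr_ge0 => //; exact: ltW.
- apply: mulr_ge0; [exact: ltW|lra].
Qed.

Lemma omega_Delta u : Delta (omega R u).
Proof.
case: u.
- exists 1, 0, 0; split => //=; [lra|]; congr (_, _); ring.
- exists 0, 1, 0; split => //=; [lra|]; congr (_, _); ring.
- exists 0, 0, 1; split => //=; [lra|]; congr (_, _); ring.
Qed.

Lemma approx (a b c : R) (z : R * R) :
  (forall e, 0 < e -> exists x : R * R,
     [/\ 0 <= lin a b c x, `|z.1 - x.1| <= e & `|z.2 - x.2| <= e]) ->
  0 <= lin a b c z.
Proof.
move=> H; rewrite leNgt; apply/negP => hv.
set v := lin a b c z in hv.
set C := `|a| + `|b| + 1.
have C0 : 0 < C by rewrite /C ltr_wpDl ?addr_ge0.
have [|x [hx h1 h2]] := H (- v / C); first by rewrite divr_gt0 // oppr_gt0.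
have ha : `|a * (x.1 - z.1)| <= `|a| * (- v / C).
  by rewrite normrM ler_wpM2l // distrC.
have hb : `|b * (x.2 - z.2)| <= `|b| * (- v / C).
  by rewrite normrM ler_wpM2l // distrC.
have e : lin a b c x = v + a * (x.1 - z.1) + b * (x.2 - z.2) by rewrite /v /lin; ring.
have hC : C * (- v / C) = - v by rewrite mulrC divfK // gt_eqF.
have ev : 0 < - v / C by rewrite divr_gt0 // oppr_gt0.
have la := ler_norm (a * (x.1 - z.1)).
have lb := ler_norm (b * (x.2 - z.2)).
move: hC; rewrite /C => hC.
have : 0 <= v + `|a| * (- v / C) + `|b| * (- v / C) by lra.
lra.
Qed.

Lemma bnd (K : set (R * R)) : compact K ->
  exists M : R, forall z, K z -> `|z.1| <= M /\ `|z.2| <= M.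
Proof.
move=> cK; case: (@compact_bounded R (R^o * R^o)%type K cK) => M [Mr HM].
exists (M + 1) => z Kz.
have hM : M < M + 1 by rewrite ltrDl.
have := HM (M+1) hM z Kz.
rewrite /= prod_normE /= => H.
split; apply: le_trans H; rewrite le_max lexx ?orbT //.
Qed.

Lemma pw (q : R) : 0 <= q < 1 -> forall e : R, 0 < e -> exists n, q ^+ n < e.
Proof.
move=> /andP[q0 q1] e e0.
have qn : `|q| < 1 by rewrite ger0_norm.
have [|n _ Hn] := cvg_expr qn (t:=[set x : R | `|x| < e]).
  apply/nbhs_ballP; exists e => //= x.
  by rewrite /ball /= sub0r normrN.
exists n; have := Hn n (leqnn n); rewrite /= ger0_norm //.
exact: exprn_ge0.
Qed.

Variable N : nat.
Variables (r : 'I_N -> R) (d : 'I_N -> R * R).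

Lemma qmax : (forall j, 0 < r j < 1) ->
  exists q : R, 0 <= q < 1 /\ forall j, r j <= q.
Proof.
move=> Hr.
suff [q [Hq Hj]] : exists q : R, 0 <= q < 1 /\ forall j, j \in enum 'I_N -> r j <= q.
  by exists q; split => // j; apply: Hj; rewrite mem_enum.
elim: (enum 'I_N) => [|j s [q [/andP[q0 q1] Hq]]].
  by exists 0; split => //; rewrite lexx ltr01.
exists (Num.max q (r j)); split.
  have /andP[_ rj1] := Hr j.
  by rewrite le_max q0 /= gt_max q1 rj1.
move=> i; rewrite in_cons => /orP[/eqP ->|/Hq hi].
  by rewrite le_max lexx orbT.
by rewrite le_max hi.
Qed.

Lemma K_inT (K : set (R * R)) : gasket_IFS r d -> attractor r d K ->
  forall z, K z -> inT z.
Proof.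
move=> [Hr [Hsub _]] [cK _ HK].
have [q [/andP[q0 q1] Hq]] := qmax Hr.
have [M HM] := @bnd K cK.
set C := M + 1.
have claim : forall n z, K z -> exists x : R * R,
   [/\ Delta x, `|z.1 - x.1| <= q ^+ n * C & `|z.2 - x.2| <= q ^+ n * C].
  elim=> [|n IH] z Kz.
    exists (omega R Va); split; first exact: omega_Delta.
    - have [h _] := HM z Kz; rewrite /= subr0 expr0 mul1r /C; lra.
    - have [_ h] := HM z Kz; rewrite /= subr0 expr0 mul1r /C; lra.
  have : (\bigcup_(j in [set: 'I_N]) (phi r d j @` K)) z by rewrite -HK.
  case=> j _ [z' Kz' <-].
  have [x' [Dx' h1 h2]] := IH z' Kz'.
  exists (phi r d j x'); split.
  - by apply: Hsub; exists x'.
  - rewrite /phi /= -mulrBr.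
    have -> : (z'.1 + (d j).1 - (x'.1 + (d j).1)) = z'.1 - x'.1 by ring.
    have /andP[rj0 _] := Hr j.
    rewrite normrM gtr0_norm // exprS -mulrA.
    apply: le_trans (ler_wpM2l (ltW rj0) h1) _.
    by apply: ler_wpM2r (Hq j); apply: le_trans h1.
  - rewrite /phi /= -mulrBr.
    have -> : (z'.2 + (d j).2 - (x'.2 + (d j).2)) = z'.2 - x'.2 by ring.
    have /andP[rj0 _] := Hr j.
    rewrite normrM gtr0_norm // exprS -mulrA.
    apply: le_trans (ler_wpM2l (ltW rj0) h2) _.
    by apply: ler_wpM2r (Hq j); apply: le_trans h2.
move=> z Kz.
have C0 : 0 < C.
  have [h _] := HM z Kz; rewrite /C; have := normr_ge0 z.1; lra.
have gen : forall a b c, (forall x, Delta x -> 0 <= lin a b c x) -> 0 <= lin a b c z.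
  move=> a b c Hx; apply: approx => e e0.
  have [n hn] := @pw q (ltac:(by rewrite q0 q1)) (e / C) (divr_gt0 e0 C0).
  have [x [Dx h1 h2]] := claim n z Kz.
  have hnC : q ^+ n * C <= e by rewrite -ler_pdivlMr // ltW.
  exists x; split; [exact: Hx | exact: le_trans hnC | exact: le_trans hnC].
split; apply: gen => x /Delta_inT [].
- by [].
- by [].
- by [].
Qed.

Lemma h_incr (Hr : forall j, 0 < r j < 1) i j :
  gedge r d i j -> r i * (d i).2 < r j * (d j).2.
Proof.
have s0 := s3_gt0.
have /andP[ri0 _] := Hr i.
have key : r i * (s3 / 2 + (d i).2) = r j * (0 + (d j).2) ->
   r i * (d i).2 < r j * (d j).2.
  move=> E; rewrite add0r in E; rewrite -E mulrDr ltrDr mulr_gt0 // divr_gt0 //.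
case/orP => /and4P [_ _ _ /eqP E]; apply: key; move: E;
  rewrite /phi /= => -[_ ->] //.
Qed.

Lemma path_h (Hr : forall j, 0 < r j < 1) x p :
  path (gedge r d) x p -> p != [::] ->
  r x * (d x).2 < r (last x p) * (d (last x p)).2.
Proof.
elim: p x => [//|y p IH] x /= /andP[exy py] _.
have h1 := @h_incr Hr x y exy.
case: p IH py => [|z p] IH py; first by [].
apply: lt_trans h1 _; exact: IH.
Qed.

End Aux.
Arguments inT {R}.
Arguments lin {R}.
Arguments K_inT {R N r d K}.
Arguments path_h {R N r d} Hr {x p}.
Arguments Delta_inT {R z}.
Arguments omega_Delta {R}.

Theorem lemma5p1 (R : realType) (N : nat) (r : 'I_N -> R) (d : 'I_N -> R * R)
  (K : set (R * R)) :
  gasket_IFS r d -> attractor r d K ->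
  K (omega R Va) -> K (omega R Vb) -> K (omega R Vc) ->
  top_isolated r d K ->
  gamma_isolated r d.
Proof.
move=> HG HA Ka Kb Kc [_ [c [Hc Htop]]].
have HG' := HG; case: HG' => [Hr [Hsub _]].
have HA' := HA; case: HA' => [_ _ HK].
have s0 := s3_gt0 R.
have pre : forall w, K w -> exists j k, K k /\ phi r d j k = w.
  move=> w Kw.
  have : (\bigcup_(j in [set: 'I_N]) (phi r d j @` K)) w by rewrite -HK.
  by case=> j _ [k Kk <-]; exists j, k.
have imD : forall j u, inT (phi r d j (omega R u)).
  move=> j u; apply: Delta_inT; apply: Hsub; exists (omega R u) => //.
  exact: omega_Delta.
have getv : forall u, (exists j, phi r d j (omega R u) = omega R u) ->
     exists a, vidx r d u = Some a.
  move=> u [j Hj]; rewrite /vidx; case: pickP => [a _|H]; first by exists a.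
  by have := H j; rewrite Hj eqxx.
have [a Ha] : exists a, vidx r d Va = Some a.
  apply: getv; have [j [k [Kk E]]] := pre _ Ka; exists j.
  have [k1 k2 _] := K_inT HG HA _ Kk.
  have /andP[rj0 _] := Hr j.
  have [p1 p2 _] := imD j Va.
  move: E p1 p2 k1 k2; rewrite /phi /lin /= => -[E1 E2].
  have D1 : (d j).1 = - k.1.
    by move/eqP: E1; rewrite mulf_eq0 gt_eqF //= addr_eq0 => /eqP ->; rewrite opprK.
  have D2 : (d j).2 = - k.2.
    by move/eqP: E2; rewrite mulf_eq0 gt_eqF //= addr_eq0 => /eqP ->; rewrite opprK.
  rewrite D1 D2 !add0r => p1 p2 k1 k2.
  have k20 : k.2 = 0 by nra.
  rewrite k20 in p2 k2.
  have A : 0 <= k.1.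
    have : 0 <= s3 R * k.1 by lra.
    by rewrite pmulr_rge0.
  have B : k.1 <= 0.
    have : (s3 R * r j) * k.1 <= 0.
      have : s3 R * (r j * - k.1) = - (s3 R * r j * k.1) by ring.
      lra.
    by rewrite pmulr_rle0 // mulr_gt0.
  have k10 : k.1 = 0 by lra.
  by rewrite k10 k20 !oppr0 !mulr0.
have [b Hb] : exists b, vidx r d Vb = Some b.
  apply: getv; have [j [k [Kk E]]] := pre _ Kb; exists j.
  have [k1 _ k3] := K_inT HG HA _ Kk.
  have /andP[rj0 _] := Hr j.
  have [p1 _ p3] := imD j Vb.
  move: E p1 p3 k1 k3; rewrite /phi /lin /= => -[E1 E2].
  have D2 : (d j).2 = - k.2.
    by move/eqP: E2; rewrite mulf_eq0 gt_eqF //= addr_eq0 => /eqP ->; rewrite opprK.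
  rewrite D2 add0r => p1 p3 k1 k3.
  have k20 : k.2 = 0 by nra.
  rewrite k20 in E1 p3 k3 D2 *.
  have e : r j * (1 + (d j).1) = r j * (1 - k.1) + 1 by rewrite -E1; ring.
  rewrite e in p3 *.
  have A : 0 <= 1 - k.1.
    have : 0 <= s3 R * (1 - k.1) by lra.
    by rewrite pmulr_rge0.
  have B : 1 - k.1 <= 0.
    have : (s3 R * r j) * (1 - k.1) <= 0.
      have : - s3 R * (r j * (1 - k.1) + 1) = - (s3 R * r j * (1 - k.1)) - s3 R by ring.
      lra.
    by rewrite pmulr_rle0 // mulr_gt0.
  have -> : 1 - k.1 = 0 by lra.
  by rewrite mulr0 add0r oppr0 mulr0.
exists a, b, c; split => //.
  case=> [//|x p] _; apply/negP; rewrite /cycle => Hp.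
  have H := path_h Hr Hp.
  have nn : rcons p x != [::] by case: (p).
  by have := H nn; rewrite last_rcons ltxx.
have iso : forall u v, Defs.isolated r d u v c.
  move=> u v; rewrite /Defs.isolated; apply/andP; split; apply/negP;
    case/existsP => i /and4P [ne _ _ /eqP E].
  - have H := Htop i ne.
    have : ((phi r d c @` Delta (R:=R)) `&` (phi r d i @` Delta (R:=R))) (phi r d c (omega R u)).
      split; first by exists (omega R u) => //; exact: omega_Delta.
      by rewrite -E; exists (omega R v) => //; exact: omega_Delta.
    by rewrite H.
  - rewrite eq_sym in ne; have H := Htop i ne.
    have : ((phi r d c @` Delta (R:=R)) `&` (phi r d i @` Delta (R:=R))) (phi r d c (omega R v)).
      split; first by exists (omega R v) => //; exact: omega_Delta.
      by rewrite E; exists (omega R u) => //; exact: omega_Delta.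
    by rewrite H.
by split; apply: iso.
Qed.
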